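(* For integers $\ell\ge 3$ and $r\ge 1$, let $\mathcal{C}_\ell$ be the class of all cycles of length at least $\ell$. Then $R_{r\text{-loc}}(\mathcal{C}_\ell)\le 2\ell r$.
   Context: An edge colouring of a graph is an $r$-local colouring if the edges incident to any vertex are coloured with at most $r$ colours (the total number of colours is not restricted). For a class of graphs $\mathcal{H}$, the $r$-local Ramsey number $R_{r\text{-loc}}(\mathcal{H})$ is the smallest $n$ such that every $r$-local colouring of the edges of $K_n$ contains a monochromatic copy of some graph $H\in\mathcal{H}$. *)

(* Defs.v *)
From mathcomp Require Import all_boot.
Set Implicit Arguments. Unset Strict Implicit. Unset Printing Implicit Defensive.

(* An edge colouring of K_n on vertex set 'I_n, colours in nat (the number of
   colours is unrestricted).  It is given as a symmetric function; its value on
   the diagonal (non-edges) is irrelevant and never used. *)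
Definition edge_colouring (n : nat) (c : 'I_n -> 'I_n -> nat) : Prop :=
  forall x y, c x y = c y x.

Definition r_local (n r : nat) (c : 'I_n -> 'I_n -> nat) : Prop :=
  forall v : 'I_n, size (undup [seq c v u | u <- enum 'I_n & u != v]) <= r.

Definition mono_cycle (n k : nat) (c : 'I_n -> 'I_n -> nat) : Prop :=
  exists (s : k.-tuple 'I_n) (col : nat),
    uniq s /\ forall i : 'I_k, c (tnth s i) (tnth s (ordS i)) = col.

Definition has_mono_cycle_ge (n l : nat) (c : 'I_n -> 'I_n -> nat) : Prop :=
  exists k, l <= k /\ mono_cycle k c.

Definition loc_ramsey_prop (r l n : nat) : Prop :=
  forall c : 'I_n -> 'I_n -> nat,
    edge_colouring c -> r_local r c -> has_mono_cycle_ge l c.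

(* R_{r-loc}(C_l) <= N, i.e. the least n with the property is at most N. *)
Definition loc_ramsey_le (r l N : nat) : Prop :=
  exists n, n <= N /\ loc_ramsey_prop r l n.

(* Main.v *)
Require Import Defs.
From mathcomp Require Import all_boot.
From mathcomp Require Import zify.
Set Implicit Arguments. Unset Strict Implicit.

Lemma sum_bool_card (T : finType) (P : pred T) :
  \sum_(i : T) (P i : nat) = #|P|.
Proof.
rewrite -sum1_card [in RHS]big_mkcond /=; apply: eq_bigr => i _.
by rewrite unfold_in; case: (P i).
Qed.


Lemma size_filter_lt (T : eqType) (p : T) (s : seq T) :
  p \in s -> size (filter (predC1 p) s) < size s.
Proof.
elim: s => //= x s IH; rewrite in_cons => /orP [/eqP ->|ps].
  by rewrite eqxx /= ltnS size_filter count_size.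
by case: (x != p) => /=; [rewrite ltnS; apply: IH | apply: leq_trans (IH ps) _].
Qed.

Lemma sumn_map_le (T : Type) (f : T -> nat) r (s : seq T) :
  (forall x, f x <= r) -> sumn [seq f x | x <- s] <= r * size s.
Proof.
move=> H; elim: s => //= x s IH; rewrite mulnS; exact: leq_add.
Qed.

Section G.
Variables (n : nat) (c : 'I_n -> 'I_n -> nat).
Hypothesis csym : forall x y, c x y = c y x.

Definition Rc (col : nat) : rel 'I_n := fun a b => c a b == col.

Lemma cycle_mono col x p : uniq (x :: p) -> cycle (Rc col) (x :: p) ->
  Defs.mono_cycle (size (x :: p)) c.
Proof.
move=> U Cy; exists (in_tuple (x :: p)), col; split => //.
move=> i; rewrite !(tnth_nth x) /=.
move: Cy; rewrite /cycle => /(pathP x) H.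
have Hi := ltn_ord i.
have := H i; rewrite size_rcons /= => /(_ Hi) /eqP.
rewrite -rcons_cons (nth_rcons _ (x :: p)) Hi nth_rcons.
case: (ltnP i.+1 (size (x::p))) => Hs.
  by rewrite modn_small //=; move: Hs; rewrite /= ltnS => ->.
have Ei : (nat_of_ord i).+1 = size (x :: p) by apply/eqP; rewrite eqn_leq Hi Hs.
rewrite Ei modnn /=.
by rewrite ltnn; case: (_ == _).
Qed.

Lemma closing (S : pred 'I_n) col d x s : 0 < d ->
  d <= #|[pred w | (w != x) && (c x w == col) && S w]| ->
  uniq (x :: s) -> path (Rc col) x s ->
  (forall y, y != x -> c x y == col -> S y -> y \in s) ->
  exists k, d < k /\ Defs.mono_cycle k c.
Proof.
move=> d0 Hd U P Hall.
set N := [pred w | (w != x) && (c x w == col) && S w] in Hd.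
have [y Ny Hy]: exists2 y, y \in N & d <= (index y s).+1.
  case: (boolP [exists y, (y \in N) && (d <= (index y s).+1)]).
    by move=> /existsP [y /andP [Ny Hy]]; exists y.
  rewrite negb_exists => /forallP Hn.
  have sub : N \subset (take d.-1 s).
    apply/subsetP => y Ny.
    have := Hn y; rewrite Ny /= -ltnNge => Hl.
    have ys : y \in s by move: Ny; rewrite unfold_in /= => /andP [/andP [H1 H2] H3]; apply: Hall.
    by rewrite in_take // -ltnS prednK.
  have := subset_leq_card sub.
  have := card_size (take d.-1 s).
  have : d.-1 < d by rewrite prednK. rewrite size_take_min; move: (d.-1) => e H1 H2 H3; exfalso; have := leq_trans Hd (leq_trans H3 (leq_trans H2 (geq_minl _ _))); lia.
have ys : y \in s by move: Ny; rewrite unfold_in /= => /andP [/andP [H1 H2] H3]; apply: Hall.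
have is_ := ys; rewrite -index_mem in is_.
exists (size (x :: take (index y s).+1 s)); split.
  by rewrite /= size_take_min (minn_idPl is_); lia.
apply: (@cycle_mono col x (take (index y s).+1 s)).
  move: U => /= /andP [xs Us]; rewrite take_uniq // andbT.
  by apply/negP => /mem_take; apply/negP.
rewrite /cycle rcons_path take_path //= (take_nth x) // last_rcons nth_index //.
by rewrite /Rc csym; move: Ny; rewrite unfold_in /= => /andP [/andP [H1 H2] H3].
Qed.

Lemma longpath (S : pred 'I_n) col d : 0 < d ->
  (forall u, S u -> d <= #|[pred w | (w != u) && (c u w == col) && S w]|) ->
  forall x s, uniq (x :: s) -> all S (x :: s) -> path (Rc col) x s ->
  exists k, d < k /\ Defs.mono_cycle k c.
Proof.
move=> d0 Hdeg.
suff H : forall m x s, n - size s <= m -> uniq (x :: s) -> all S (x :: s) ->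
  path (Rc col) x s -> exists k, d < k /\ Defs.mono_cycle k c.
  by move=> x s; apply: (H (n - size s)).
elim=> [|m IH] x s Hm U A P.
all: case: (boolP [exists y, [&& y != x, c x y == col, S y & y \notin x :: s]]).
- move=> _; exfalso.
  have := max_card (mem (x :: s)); rewrite card_ord (card_uniqP U) /=; by move=> H; move: Hm; rewrite leqn0 subn_eq0 leqNgt H.
- rewrite negb_exists => /forallP Hn; apply: (closing (S := S) (col := col) d0 _ U P).
    by apply: Hdeg; move: A => /= /andP [].
  move=> y yx cy Sy; have := Hn y; rewrite yx cy Sy /= in_cons negbK (negbTE yx) //.
- move=> /existsP [y /and4P [yx cy Sy yn]].
  apply: (IH y (x :: s)).
  + by rewrite /= subnS -subn1 leq_subLR add1n.
  + by move: U; rewrite /= yn => ->.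
  + by move: A; rewrite /= Sy => ->.
  + by rewrite /= P /Rc csym cy.
- rewrite negb_exists => /forallP Hn; apply: (closing (S := S) (col := col) d0 _ U P).
    by apply: Hdeg; move: A => /= /andP [].
  move=> y yx cy Sy; have := Hn y; rewrite yx cy Sy /= in_cons negbK (negbTE yx) //.
Qed.


Definition deg (A : seq ('I_n * nat)) v col :=
  #|[pred w | (w != v) && (c v w == col) && ((w, col) \in A)]|.
Definition live (A : seq ('I_n * nat)) :=
  \sum_(u : 'I_n) \sum_(w : 'I_n)
     ((u != w) && ((u, c u w) \in A) && ((w, c u w) \in A) : nat).

Lemma live_rem A v col :
  live A <= live (filter (predC1 (v, col)) A) + deg A v col + deg A v col.
Proof.
have E1 : \sum_(u : 'I_n) \sum_(w : 'I_n)
   ((u == v) && ((w != v) && (c v w == col) && ((w, col) \in A)) : nat)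
   = deg A v col.
  rewrite (bigD1 v) //= [X in _ + X]big1 ?addn0; last first.
    move=> u uv; rewrite big1 // => w _; by rewrite (negbTE uv).
  rewrite /deg -sum_bool_card; apply: eq_bigr => w _; by rewrite eqxx.
have E2 : \sum_(u : 'I_n) \sum_(w : 'I_n)
   ((w == v) && ((u != v) && (c v u == col) && ((u, col) \in A)) : nat)
   = deg A v col.
  by rewrite exchange_big -E1.
rewrite /live -{1}E1 -{}E2 -!big_split; apply: leq_sum => u _.
rewrite -!big_split; apply: leq_sum => w _ /=.
rewrite !mem_filter /=.
case: (boolP ((u != w) && ((u, c u w) \in A) && ((w, c u w) \in A))) => //.
move=> /andP [/andP [uw Hu] Hw].
case: (boolP ((u, c u w) == (v, col))) => [/eqP [eu ec] | nu].
  subst u; move: Hw; rewrite ec => Hw.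
  have wv : w != v by rewrite eq_sym.
  by rewrite eqxx wv Hw /=; lia.
case: (boolP ((w, c u w) == (v, col))) => [/eqP [ew ec] | nw].
  subst w; move: Hu; rewrite ec => Hu.
  by rewrite uw csym ec eqxx Hu /=; lia.
by rewrite uw Hu Hw /=; lia.
Qed.

Lemma peel e A :
  (exists k, e.+1 < k /\ Defs.mono_cycle k c) \/ live A <= 2 * e * size A.
Proof.
move: {2}(size A) (leqnn (size A)) => m; elim: m A => [|m IH] A Hs.
  case: A Hs => // _; right; rewrite /live big1 // => u _.
  by rewrite big1 // => w _; rewrite in_nil andbF.
case: (boolP (has (fun p => deg A p.1 p.2 < e.+1) A)).
  move=> /hasP [[v col] pA /= Hd].
  have Hlt := size_filter_lt pA.
  have Hm : size (filter (predC1 (v, col)) A) <= m by rewrite -ltnS (leq_trans Hlt Hs).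
  have [L|R] := IH (filter (predC1 (v, col)) A) Hm.
    by left.
  right; have := live_rem A v col; move: Hlt R Hd; rewrite ltnS; move=> H1 H2 H3 H4; have H5 := leq_mul (leqnn (2 * e)) H1; rewrite mulnS in H5; apply: (leq_trans H4); apply: leq_trans _ H5; rewrite -addnA addnC leq_add // addnn -mul2n leq_mul2l H3 orbT //.
move=> /hasPn Hn.
case: A Hs Hn => [|[v col] A2] Hs Hn.
  by right; rewrite /live big1 // => u _; rewrite big1 // => w _; rewrite in_nil andbF.
left.
apply: (@longpath (fun u => (u, col) \in (v, col) :: A2) col e.+1 _ _ v [::]) => //=.
- move=> u Su; have := Hn (u, col) Su; rewrite /= -leqNgt; exact.
- by rewrite andbT in_cons eqxx.
Qed.

End G.

Unset Implicit Arguments.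
Theorem corollary2p5 (l r : nat) : 3 <= l -> 1 <= r ->
  loc_ramsey_le r l (2 * l * r).
Proof.
move=> l3 r1.
exists (2 * (l - 2) * r).+2; split; first by nia.
set n := (2 * (l - 2) * r).+2.
move=> c csym rl.
pose cols (v : 'I_n) := undup [seq c v u | u <- enum 'I_n & u != v].
pose A0 := [seq (v, col) | v <- enum 'I_n, col <- cols v].
have mA0 : forall u w : 'I_n, u != w -> (u, c u w) \in A0.
  move=> u w uw; apply/allpairsPdep; exists u, (c u w); split => //.
    by rewrite mem_enum.
  by rewrite mem_undup; apply: map_f; rewrite mem_filter mem_enum andbT eq_sym.
have [[k [Hk Hm]]|H] := peel csym (l - 2) A0.
  by exists k; split => //; lia.
exfalso.
have Hsz : size A0 <= r * n.
  rewrite size_allpairs_dep.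
  by have := @sumn_map_le _ (fun v => size (cols v)) r (enum 'I_n) rl; rewrite size_enum_ord.
have Hlv : \sum_(u : 'I_n) n.-1 <= live c A0.
  apply: leq_sum => u _.
  have -> : n.-1 = #|predC1 u| by rewrite cardC1 card_ord.
  rewrite -sum_bool_card; apply: leq_sum => w _ /=.
  case: (boolP (w != u)) => //= wu.
  have uw : u != w by rewrite eq_sym.
  by rewrite uw mA0 // csym mA0.
rewrite sum_nat_const card_ord in Hlv.
have H2 := leq_mul (leqnn (2 * (l - 2))) Hsz.
have := leq_trans Hlv (leq_trans H (leq_trans H2 (leqnn _))).
rewrite /n /=; nia.
Qed.
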